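(* Let $n\ge2$, let $c=(c_{i,j})$ be an $n\times(n+1)$ matrix with entries in $\{0,1\}$, $\sigma_1,\ldots,\sigma_n>0$, $\gamma_1,\ldots,\gamma_{n+1}>0$. Let $\mathbf{X}=(X_1,\ldots,X_n)'$ have decumulative distribution function $\mathbf{P}[X_1>x_1,\ldots,X_n>x_n]=\prod_{j=1}^{n+1}(1+\sum_{i=1}^nc_{i,j}x_i/\sigma_i)^{-\gamma_j}$ for $(x_1,\ldots,x_n)'\in(0,\infty)^n$. For $1\le k\ne l\le n$ let $\gamma_{c,(k,l)}=\gamma_{c,(l,k)}=\sum_jc_{k,j}c_{l,j}\gamma_j$ (assumed $>0$), $\gamma_{c,k}=\sum_jc_{k,j}(1-c_{l,j})\gamma_j$ and $m(x_l)=\frac{\sigma_k}{\gamma_{c,(k,l)}}(1+x_l/\sigma_l)$. Then for $x_k,x_l>0$, \[ \mathbf{P}[X_k>x_k\mid X_l>x_l]=\left(1+\frac{x_k}{\sigma_k}\right)^{-\gamma_{c,k}}\left(1+\frac{x_k}{\gamma_{c,(k,l)}m(x_l)}\right)^{-\gamma_{c,(l,k)}}. \] *)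

(* Defs.v *)
From HB Require Import structures.
From mathcomp Require Import all_boot all_order all_algebra.
From mathcomp Require Import all_classical all_reals all_analysis.
Set Implicit Arguments. Unset Strict Implicit. Unset Printing Implicit Defensive.
Import Order.TTheory GRing.Theory Num.Theory.
Local Open Scope classical_set_scope.
Local Open Scope ring_scope.

Definition cond_prob d (T : measurableType d) (R : realType)
  (P : probability T R) (A B : set T) : R :=
  fine (P (A `&` B)) / fine (P B).

Definition gamma_c2 (R : realType) (n : nat) (c : 'M[R]_(n, n.+1))
  (gamma : 'I_n.+1 -> R) (k l : 'I_n) : R :=
  \sum_(j < n.+1) c k j * c l j * gamma j.

Definition gamma_c1 (R : realType) (n : nat) (c : 'M[R]_(n, n.+1))
  (gamma : 'I_n.+1 -> R) (k l : 'I_n) : R :=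
  \sum_(j < n.+1) c k j * (1 - c l j) * gamma j.

Definition m_fun (R : realType) (n : nat) (c : 'M[R]_(n, n.+1))
  (sigma : 'I_n -> R) (gamma : 'I_n.+1 -> R) (k l : 'I_n) (xl : R) : R :=
  sigma k / gamma_c2 c gamma k l * (1 + xl / sigma l).

(* Main.v *)
Require Import Defs.
From HB Require Import structures.
From mathcomp Require Import all_boot all_order all_algebra.
From mathcomp Require Import all_classical all_reals all_analysis.
From mathcomp Require Import ring.
Import Order.TTheory GRing.Theory Num.Theory.
Local Open Scope classical_set_scope.
Local Open Scope ring_scope.
Import numFieldNormedType.Exports.

Lemma cvg_powR_harm (R : realType) (a b p : R) : 0 < a -> 0 <= b ->
  (fun m : nat => (a + harmonic m * b) `^ p) @ \oo --> a `^ p.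
Proof.
move=> a0 b0.
have pos m : 0 < a + harmonic m * b.
  by rewrite ltr_wpDr // mulr_ge0 // ltW // harmonic_gt0.
have -> : (fun m : nat => (a + harmonic m * b) `^ p) =
   (expR \o (fun m => p * ln (a + harmonic m * b))).
  apply: boolp.funext => m; have := pos m; rewrite /= /powR => /gt_eqF -> //.
rewrite /powR (gt_eqF a0).
have H1 : (fun m : nat => a + harmonic m * b) @ \oo --> a.
  rewrite -[X in _ --> X]addr0.
  apply: cvgD; first exact: cvg_cst.
  rewrite -(mul0r b).
  apply: cvgMr_tmp.
  exact: cvg_harmonic.
have H2 := continuous_cvg _ (@continuous_ln R a a0) H1.
have H3 : (fun m : nat => p * ln (a + harmonic m * b)) @ \oo --> p * ln a.
  by apply: cvgMl_tmp; exact: H2.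
exact: (continuous_cvg _ (@continuous_expR R _) H3).
Qed.

Lemma cvg_prod_seq (R : realType) (I : eqType) (r : seq I) (F : I -> nat -> R) (L : I -> R) :
  (forall j, F j @ \oo --> L j) ->
  (fun m => \prod_(j <- r) F j m) @ \oo --> \prod_(j <- r) L j.
Proof.
move=> H; elim: r => [|x r IH].
  rewrite big_nil; under eq_fun do rewrite big_nil; exact: cvg_cst.
rewrite big_cons; under eq_fun do rewrite big_cons.
exact: cvgM.
Qed.

Lemma key (d : measure_display) (T : measurableType d)
  (R : realType) (P : probability T R) (n : nat)
  (c : 'M[R]_(n, n.+1)) (hc : forall i j, c i j = 0 \/ c i j = 1)
  (sigma : 'I_n -> R) (hsigma : forall i, 0 < sigma i)
  (gamma : 'I_n.+1 -> R)
  (X : 'I_n -> {RV P >-> R})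
  (hX : forall x : 'I_n -> R, (forall i, 0 < x i) ->
     P (\bigcap_(i : 'I_n) [set w | x i < X i w]) =
     (\prod_(j < n.+1) (1 + \sum_(i < n) c i j * x i / sigma i) `^ (- gamma j))%:E)
  (y : 'I_n -> R) (hy : forall i, 0 <= y i) :
  fine (P (\bigcap_(i in [set i | 0 < y i]) [set w | y i < X i w])) =
  \prod_(j < n.+1) (1 + \sum_(i < n) c i j * y i / sigma i) `^ (- gamma j).
Proof.
have c0 i j : 0 <= c i j by case: (hc i j) => ->.
have mev i t : measurable [set w | t < X i w].
  have -> : [set w | t < X i w] = X i @^-1` `]t, +oo[.
    by apply/seteqP; split => w /=; rewrite in_itv /= andbT.
  apply: measurable_funPTI; exact: measurable_itv.
have mbig (D : set 'I_n) (z : 'I_n -> R) :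
    measurable (\bigcap_(i in D) [set w | z i < X i w]).
  by apply: fin_bigcap_measurable => //; exact: finite_finset.
pose xe (z : 'I_n -> R) (e : R) i := if 0 < z i then z i else e.
pose A (z : 'I_n -> R) j := \sum_(i < n) c i j * z i / sigma i.
pose B (z : 'I_n -> R) j := \sum_(i < n) (if 0 < z i then 0 else c i j / sigma i).
pose Phi z e := \prod_(j < n.+1) ((1 + A z j) + e * B z j) `^ (- gamma j).
have hXe z e : (forall i, 0 <= z i) -> 0 < e ->
    P (\bigcap_(i : 'I_n) [set w | xe z e i < X i w]) = (Phi z e)%:E.
  move=> hz he; rewrite hX; last by move=> i; rewrite /xe; case: ifP.
  congr (_%:E); apply: eq_bigr => j _; congr (_ `^ _).
  rewrite -addrA; congr (_ + _).
  rewrite /A /B mulr_sumr -big_split; apply: eq_bigr => i _.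
  rewrite /xe /=; case: ifP => h; first by rewrite mulr0 addr0.
  have -> : z i = 0 by apply/eqP; rewrite eq_le hz andbT leNgt h.
  by rewrite mulr0 mul0r add0r mulrA mulrAC mulrC mulrA.
have Phicvg z : (forall i, 0 <= z i) ->
    (fun m : nat => Phi z (harmonic m)) @ \oo -->
    \prod_(j < n.+1) (1 + A z j) `^ (- gamma j).
  move=> hz; apply: cvg_prod_seq => j; apply: cvg_powR_harm.
    rewrite ltr_wpDr //; apply: sumr_ge0 => i _.
    by rewrite divr_ge0 ?mulr_ge0 // ltW.
  apply: sumr_ge0 => i _; case: ifP => // _.
  by rewrite divr_ge0 // ltW.
set Ey := \bigcap_(i in [set i | 0 < y i]) [set w | y i < X i w].
have mEy : measurable Ey by exact: mbig.
have finE (S : set T) : measurable S -> P S = (fine (P S))%:E.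
  by move=> mS; rewrite fineK // fin_num_measure.
pose z0 := fun _ : 'I_n => (0 : R).
have hz0 : forall i, 0 <= z0 i by [].
have ineq e : 0 < e ->
    Phi y e <= fine (P Ey) <= Phi y e + (1 - Phi z0 e).
  move=> he.
  set Ee := \bigcap_(i : 'I_n) [set w | xe y e i < X i w].
  set Ce := \bigcap_(i : 'I_n) [set w | xe z0 e i < X i w].
  have mEe : measurable Ee by exact: mbig.
  have mCe : measurable Ce by exact: mbig.
  have sub1 : Ee `<=` Ey.
    move=> w /= Hw i /= hi; have := Hw i I; by rewrite /xe hi.
  have sub2 : Ey `<=` Ee `|` ~` Ce.
    move=> w Hw; case: (pselect (Ce w)) => Hc; [left|by right].
    move=> i _; have := Hc i I; rewrite /xe /z0 ltxx /=.
    case: ifP => // hi _; exact: Hw.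
  apply/andP; split.
    rewrite -lee_fin -finE // -hXe //.
    by apply: le_measure => //; rewrite inE.
  rewrite -lee_fin -finE // EFinD EFinB -!hXe //.
  rewrite -probability_setC //.
  apply: le_trans (measureU2 _ _ _) => //; last exact: measurableC.
  by apply: le_measure => //; rewrite inE //; apply: measurableU => //; exact: measurableC.
have L1 := Phicvg y hy.
have L0 := Phicvg z0 hz0.
have A0 : \prod_(j < n.+1) (1 + A z0 j) `^ (- gamma j) = 1.
  rewrite big1 // => j _; rewrite /A big1 ?addr0 ?powR1 // => i _.
  by rewrite /z0 mulr0 mul0r.
rewrite A0 in L0.
have L2 : (fun m : nat => Phi y (harmonic m) + (1 - Phi z0 (harmonic m))) @ \oo -->
    \prod_(j < n.+1) (1 + A y j) `^ (- gamma j) + (1 - 1).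
  apply: cvgD => //; apply: cvgB => //; exact: cvg_cst.
rewrite subrr addr0 in L2.
change (fine (P Ey) = \prod_(j < n.+1) (1 + A y j) `^ (- gamma j)).
apply/eqP; rewrite eq_le; apply/andP; split.
  have H : \forall m \near \oo, fine (P Ey) <= Phi y (harmonic m) + (1 - Phi z0 (harmonic m)).
    by apply: nearW => m; have /andP[] := ineq _ (harmonic_gt0 m).
  have := limr_ge (cvgP _ L2) H.
  have E2 := L2; move/(cvg_lim (@norm_hausdorff _ _)): E2 => E2.
  by rewrite E2 => h; apply: h; exact: _.
have H : \forall m \near \oo, fine (P Ey) >= Phi y (harmonic m).
  by apply: nearW => m; have /andP[] := ineq _ (harmonic_gt0 m).
have := limr_le (cvgP _ L1) H.
have E1 := L1; move/(cvg_lim (@norm_hausdorff _ _)): E1 => E1.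
by rewrite E1 => h; apply: h; exact: _.
Qed.

Lemma powR_sum (R : realType) (I : Type) (r : seq I) (a : R) (e : I -> R) :
  0 < a -> a `^ (\sum_(j <- r) e j) = \prod_(j <- r) a `^ e j.
Proof.
move=> a0; elim: r => [|x r IH]; first by rewrite !big_nil powRr0.
by rewrite !big_cons powRD ?IH // (gt_eqF a0) implybT.
Qed.

Lemma powR_sumN (R : realType) (m : nat) (a : R) (e : 'I_m -> R) :
  0 < a -> a `^ (- \sum_(j < m) e j) = \prod_(j < m) a `^ (- e j).
Proof. by move=> a0; rewrite -sumrN powR_sum. Qed.

Theorem proposition4p4 (d : measure_display) (T : measurableType d)
  (R : realType) (P : probability T R) (n : nat) (hn : (2 <= n)%N)
  (c : 'M[R]_(n, n.+1)) (hc : forall i j, c i j = 0 \/ c i j = 1)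
  (sigma : 'I_n -> R) (hsigma : forall i, 0 < sigma i)
  (gamma : 'I_n.+1 -> R) (hgamma : forall j, 0 < gamma j)
  (X : 'I_n -> {RV P >-> R})
  (hX : forall x : 'I_n -> R, (forall i, 0 < x i) ->
     P (\bigcap_(i : 'I_n) [set w | x i < X i w]) =
     (\prod_(j < n.+1) (1 + \sum_(i < n) c i j * x i / sigma i) `^ (- gamma j))%:E)
  (k l : 'I_n) (hkl : k != l) (hgkl : 0 < gamma_c2 c gamma k l)
  (xk xl : R) (hxk : 0 < xk) (hxl : 0 < xl) :
  cond_prob P [set w | xk < X k w] [set w | xl < X l w] =
  (1 + xk / sigma k) `^ (- gamma_c1 c gamma k l) *
  (1 + xk / (gamma_c2 c gamma k l * m_fun c sigma gamma k l xl))
    `^ (- gamma_c2 c gamma l k).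
Proof.
have hlk : (l == k) = false by rewrite eq_sym; exact/negbTE.
pose yAB := fun i => if i == k then xk else if i == l then xl else 0.
pose yB := fun i => if i == l then xl else 0.
have hyAB i : 0 <= yAB i.
  by rewrite /yAB; case: ifP => _; [exact: ltW|case: ifP => _ //; exact: ltW].
have hyB i : 0 <= yB i by rewrite /yB; case: ifP => _ //; exact: ltW.
have eAB : [set w | xk < X k w] `&` [set w | xl < X l w] =
    \bigcap_(i in [set i | 0 < yAB i]) [set w | yAB i < X i w].
  apply/seteqP; split => w /=.
    move=> [hk hl] i /=; rewrite /yAB.
    case: ifP => [/eqP -> //|_]; case: ifP => [/eqP -> //|_].
    by rewrite ltxx.
  move=> H; split.
    have h1 : 0 < yAB k by rewrite /yAB eqxx.
    by have := H k h1; rewrite /yAB eqxx.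
  have h1 : 0 < yAB l by rewrite /yAB hlk eqxx.
  by have := H l h1; rewrite /yAB hlk eqxx.
have eB : [set w | xl < X l w] =
    \bigcap_(i in [set i | 0 < yB i]) [set w | yB i < X i w].
  apply/seteqP; split => w /=.
    move=> hl i /=; rewrite /yB.
    case: ifP => [/eqP -> //|_].
    by rewrite ltxx.
  move=> H; have h1 : 0 < yB l by rewrite /yB eqxx.
  by have := H l h1; rewrite /yB eqxx.
rewrite /cond_prob eAB eB (@key _ _ _ P n c hc sigma hsigma gamma X hX yAB hyAB) (@key _ _ _ P n c hc sigma hsigma gamma X hX yB hyB).
have sAB j : \sum_(i < n) c i j * yAB i / sigma i =
    c k j * xk / sigma k + c l j * xl / sigma l.
  rewrite (bigD1 k) //= (bigD1 l) 1?eq_sym //= [X in _ + (_ + X)]big1 ?addr0.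
    by rewrite /yAB eqxx hlk eqxx.
  move=> i /andP[hik hil]; rewrite /yAB (negbTE hik) (negbTE hil).
  by rewrite mulr0 mul0r.
have sB j : \sum_(i < n) c i j * yB i / sigma i = c l j * xl / sigma l.
  rewrite (bigD1 l) //= big1 ?addr0; first by rewrite /yB eqxx.
  move=> i hil; rewrite /yB (negbTE hil).
  by rewrite mulr0 mul0r.
under eq_bigr do rewrite sAB.
under [X in _ / X]eq_bigr do rewrite sB.
rewrite -prodfV -big_split /=.
have sk0 := hsigma k; have sl0 := hsigma l.
have bl0 : 0 < 1 + xl / sigma l by rewrite ltr_wpDr // divr_ge0 // ltW.
have bk0 : 0 < 1 + xk / sigma k by rewrite ltr_wpDr // divr_ge0 // ltW.
have hm : gamma_c2 c gamma k l * m_fun c sigma gamma k l xl =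
    sigma k * (1 + xl / sigma l).
  by rewrite /m_fun mulrA mulrCA mulfV ?gt_eqF // mulr1.
rewrite hm.
set bl := 1 + xl / sigma l; set bk := 1 + xk / sigma k.
set q := 1 + xk / (sigma k * bl).
have q0 : 0 < q by rewrite ltr_wpDr // divr_ge0 ?mulr_ge0 // ltW.
have hq : 1 + (xk / sigma k + xl / sigma l) = bl * q.
  rewrite /q /bl /bk; field.
  by apply/and3P; split; rewrite gt_eqF // addr_gt0.
rewrite /gamma_c1 /gamma_c2 !powR_sumN //.
rewrite -big_split /=; apply: eq_bigr => j _.
case: (hc k j) => ->; case: (hc l j) => ->.
all: rewrite ?mul0r ?mul1r ?subr0 ?subrr ?mulr0 ?mul0r ?mul1r ?addr0 ?add0r ?oppr0 ?powRr0 ?mul1r ?mulr1.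
- by rewrite powR1 /= divr1.
- by rewrite divff // gt_eqF // powR_gt0.
- by rewrite powR1 /= divr1.
- rewrite hq powRM ?ltW // mulrAC divff ?mul1r //.
  by rewrite gt_eqF // powR_gt0.
Qed.
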